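(* Let $(G,\sigma)$ be a signed graph and $S\subseteq V(G)$. Then $S$ is $s$-redundant if and only if for every $z\in S$ and every $x,y\in N(z)\setminus S$ with $xy\notin E(G)$, there exists $w\in V(G)\setminus S$ such that $x w y z$ is a balanced $4$-cycle of $(G,\sigma)$.
   Context: A signed graph $(G,\sigma)$ is a simple loopless undirected graph with a signature $\sigma:E(G)\to\{+1,-1\}$. Switching a vertex negates the signs of its incident edges; two signatures are equivalent if one is obtained from the other by switching a set of vertices. A path or cycle is balanced if the product of the signs of its edges is $+1$ and unbalanced otherwise; $UP_3$ denotes an unbalanced path on $3$ vertices. $N(z)$ is the neighbourhood of $z$. A set $S\subseteq V(G)$ is $s$-redundant if for all $x,y\in V(G)\setminus S$ with $xy\notin E(G)$, every $z\in S$ and every signature $\sigma'$ equivalent to $\sigma$: if $xzy$ is a $UP_3$ in $(G,\sigma')$, then there exists $w\in V(G)\setminus S$ such that $xwy$ is a $UP_3$ in $(G,\sigma')$. *)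

(* Defs.v *)
From mathcomp Require Import all_boot.
Set Implicit Arguments. Unset Strict Implicit. Unset Printing Implicit Defensive.

(* A signed graph on a finite vertex type T:
   - adj : rel T is the (symmetric, irreflexive) adjacency relation of a simple
     loopless graph G;
   - sigma : T -> T -> bool is the signature, encoded by
     sigma x y = true  <->  the edge xy has sign -1,
     sigma x y = false <->  the edge xy has sign +1.
     It is required to be symmetric; its values on non-edges are irrelevant.
   The product of signs along a path/cycle is then the xor ([addb]) of the
   encodings: the product is -1 iff the xor is true. *)

Definition simple_graph (T : finType) (adj : rel T) : Prop :=
  symmetric adj /\ irreflexive adj.

Definition signature_on (T : finType) (sigma : T -> T -> bool) : Prop :=
  forall x y, sigma x y = sigma y x.

(* Switching the vertex set X: an edge xy changes sign iff exactly one of its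
   endpoints is in X (switching each vertex of X negates its incident edges). *)
Definition switch (T : finType) (X : {set T}) (sigma : T -> T -> bool) :
  T -> T -> bool :=
  fun x y => sigma x y (+) (x \in X) (+) (y \in X).

(* Signatures equivalent to sigma are exactly those (on the edges) of the form
   switch X sigma. *)

Definition UP3 (T : finType) (adj : rel T) (sigma' : T -> T -> bool)
  (x z y : T) : Prop :=
  [/\ uniq [:: x; z; y], adj x z, adj z y & sigma' x z (+) sigma' z y].

Definition balanced_C4 (T : finType) (adj : rel T) (sigma : T -> T -> bool)
  (x w y z : T) : Prop :=
  [/\ uniq [:: x; w; y; z], [&& adj x w, adj w y, adj y z & adj z x] &
      ~~ (sigma x w (+) sigma w y (+) sigma y z (+) sigma z x)].

Definition s_redundant (T : finType) (adj : rel T) (sigma : T -> T -> bool)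
  (S : {set T}) : Prop :=
  forall x y, x \notin S -> y \notin S -> x != y -> ~~ adj x y ->
  forall z, z \in S ->
  forall X : {set T},
    UP3 adj (switch X sigma) x z y ->
    exists w, w \notin S /\ UP3 adj (switch X sigma) x w y.

(* Main.v *)
Require Import Defs.
From mathcomp Require Import all_boot.

Theorem proposition5p2 (T : finType) (adj : rel T) (sigma : T -> T -> bool)
  (S : {set T}) :
  simple_graph adj -> signature_on sigma ->
  s_redundant adj sigma S <->
  (forall z, z \in S -> forall x y, adj z x -> adj z y ->
     x \notin S -> y \notin S -> x != y -> ~~ adj x y ->
     exists w, w \notin S /\ balanced_C4 adj sigma x w y z).
Proof.
move=> [asym airr] ssym; split.
- move=> H z zS x y azx azy xS yS xy nxy.
  have xz : x != z by apply/eqP => E; subst; rewrite airr in azx.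
  have zy : z != y by apply/eqP => E; subst; rewrite airr in azy.
  pose X : {set T} := if sigma x z (+) sigma z y then set0 else [set x].
  have U : UP3 adj (switch X sigma) x z y.
    split => //.
    - by rewrite /= !inE negb_or xz xy zy.
    - by rewrite asym.
    rewrite /switch /X; case E: (sigma x z (+) sigma z y); first by rewrite !inE !addbF.
    rewrite !inE eqxx (eq_sym z x) (negbTE xz) (eq_sym y x) (negbTE xy).
    move: E; by case: (sigma x z); case: (sigma z y).
  have [w [wS [Hu Haxw Hawy Hp]]] := H x y xS yS xy nxy z zS X U.
  exists w; split => //; split.
  + move: Hu; rewrite /= !inE !negb_or => /and3P[/andP[-> ->] -> _].
    rewrite xz (eq_sym y z) zy /= andbT; apply/eqP => E; subst; by rewrite zS in wS.
  + by rewrite Haxw Hawy (asym y z) azy azx.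
  + move: Hp U => + [_ _ _]; rewrite /switch (ssym y z) (ssym z x).
    by case: (sigma x w); case: (sigma w y); case: (sigma x z); case: (sigma z y);
      case: (x \in X); case: (y \in X); case: (w \in X); case: (z \in X).
- move=> H x y xS yS xy nxy z zS X [Hu axz azy Hp].
  have azx : adj z x by rewrite asym.
  have [w [wS [Hu4 /and4P[axw awy ayz _] Hb]]] := H z zS x y azx azy xS yS xy nxy.
  exists w; split => //; split => //.
  + move: Hu4; rewrite /= !inE !negb_or => /and4P[/and3P[-> -> _] /andP[-> _] _ _].
    by [].
  + move: Hp Hb; rewrite /switch (ssym y z) (ssym z x).
    by case: (sigma x w); case: (sigma w y); case: (sigma x z); case: (sigma z y);
      case: (x \in X); case: (y \in X); case: (w \in X); case: (z \in X).
Qed.
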